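(* Fix an integer $L\ge 1$ and a real $r\in[0,\frac{L}{L+1})$. There exist an integer $N=N(r,L)$ and a function $g_{r,L}:\mathbb{N}\to[0,\infty)$ with $g_{r,L}(n)\to 0$ as $n\to\infty$ such that the following holds. For every integer $q\ge 2$ and every $n\ge N$ with $rn\in\mathbb{N}$, every $(r,L)$ list-decodable code $C\subseteq[q]^n$ satisfies $$|C|\le \max\{q(1+g_{r,L}(n)),\,L\}\cdot q^{\,n-(\lfloor\frac{L+1}{L}rn\rfloor+1)}.$$
   Context: $[q]=\{1,\dots,q\}$. A code of length $n$ over an alphabet of size $q$ is a subset $C\subseteq[q]^n$. The Hamming distance $d(x,y)$ of $x,y\in[q]^n$ is the number of coordinates where they differ, and $B_t(v)$ is the set of vectors of $[q]^n$ at Hamming distance at most $t$ from $v$. A code $C\subseteq[q]^n$ is $(r,L)$ list-decodable if $|B_{rn}(v)\cap C|\le L$ for every $v\in[q]^n$. *)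

(* Defs.v *)
From HB Require Import structures.
From mathcomp Require Import all_boot all_order all_algebra.
From mathcomp Require Import all_classical all_reals all_analysis.
Set Implicit Arguments. Unset Strict Implicit. Unset Printing Implicit Defensive.
Import Order.TTheory GRing.Theory Num.Theory.
Local Open Scope ring_scope.

Definition word (q n : nat) := {ffun 'I_n -> 'I_q}.

Definition hamming (q n : nat) (x y : word q n) : nat :=
  #|[set i : 'I_n | x i != y i]|.

Definition list_decodable (R : realType) (q n : nat) (r : R) (L : nat)
  (C : {set word q n}) : Prop :=
  forall v : word q n,
    (#|[set c in C | ((hamming v c)%:R <= r * n%:R)%R]| <= L)%N.

(* Main.v *)
Require Import Defs.
From HB Require Import structures.
From mathcomp Require Import all_boot all_order all_algebra.
From mathcomp Require Import zify.
Set Implicit Arguments. Unset Strict Implicit. Unset Printing Implicit Defensive.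
Import Order.TTheory GRing.Theory Num.Theory.

Lemma subset_card (T : finType) (F : {set T}) k :
  k <= #|F| -> exists A : {set T}, A \subset F /\ #|A| = k.
Proof.
elim: k => [|k IH] hk.
  by exists set0; split; [exact: sub0set|exact: cards0].
have [A [sAF cA]] := IH (ltnW hk).
case: (pickP [pred x | (x \in F) && (x \notin A)]) => [x /andP [xF xnA] | h].
  exists (x |: A); split; first by rewrite subUset sub1set xF sAF.
  by rewrite cardsU1 xnA cA.
have sFA : F \subset A.
  apply/subsetP => x xF; have := h x; rewrite /= xF /=; by case: (x \in A).
have := subset_leq_card sFA; rewrite cA; lia.
Qed.

Lemma card_sum (T : finType) (A : {set T}) (P : pred T) :
  #|[set x in A | P x]| = \sum_(x in A) (P x : nat).
Proof.
rewrite -sum1_card big_mkcond /= [RHS]big_mkcond /=; apply: eq_bigr => x _.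
by rewrite !inE; case: (x \in A); case: (P x).
Qed.

Lemma assign (T X : finType) (x0 : X) (D : X -> nat) (S : {set X}) (F : {set T}) :
  \sum_(u in S) D u <= #|F| ->
  exists tau : T -> X, forall u, u \in S -> D u <= #|[set j in F | tau j == u]|.
Proof.
move: {2}#|S|.+1 (ltnSn #|S|) => c; elim: c S F => // c IH S F hc hsum.
case: (set_0Vmem S) => [-> | [u uS]].
  by exists (fun _ => x0) => u; rewrite in_set0.
rewrite (big_setD1 u uS) /= in hsum.
have [A [sAF cA]] := subset_card (F := F) (k := D u) ltac:(lia).
have hc' : #|S :\ u| < c by move: hc; rewrite (cardsD1 u S) uS /= add1n; lia.
have hF : #|F :\: A| = #|F| - D u.
  by rewrite cardsD (setIidPr sAF) cA.
have [tau' Htau'] := IH (S :\ u) (F :\: A) hc' ltac:(rewrite hF; lia).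
exists (fun j => if j \in A then u else tau' j) => u' u'S.
case: (eqVneq u' u) => [-> | ne].
  rewrite -cA; apply: subset_leq_card; apply/subsetP => j jA.
  by rewrite inE jA (subsetP sAF j jA) eqxx.
apply: (leq_trans (Htau' u' _)); first by rewrite !inE ne u'S.
apply: subset_leq_card; apply/subsetP => j; rewrite !inE.
case/andP => /andP [jnA jF] /eqP <-; by rewrite (negbTE jnA) jF eqxx.
Qed.

Section Core.
Variables q n : nat.
Implicit Types (G C : {set word q n}) (J : {set 'I_n}).

Definition iso G (w : word q n) (j : 'I_n) : bool :=
  [forall c in G, (c != w) ==> (c j != w j)].

Lemma iso_card G j : #|[set w in G | iso G w j]| <= q.
Proof.
have := @leq_card_in _ _ (fun w : word q n => w j) [set w in G | iso G w j].
rewrite card_ord; apply => w1 w2; rewrite !inE => /andP [w1G i1] /andP [w2G i2] e.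
apply/eqP; apply/negPn/negP => ne.
move/forall_inP: i1 => /(_ w2 w2G); rewrite eq_sym ne /= e eqxx //.
Qed.

Lemma count_branch G J L :
  (forall w, w \in G -> #|[set j in J | ~~ iso G w j]| < L) ->
  #|G| * (#|J| + 1 - L) <= #|J| * q.
Proof.
move=> H.
have H1 : forall w, w \in G -> #|J| + 1 - L <= #|[set j in J | iso G w j]|.
  move=> w wG; have := H w wG.
  have : #|[set j in J | iso G w j]| + #|[set j in J | ~~ iso G w j]| = #|J|.
    rewrite -[RHS](cardsID [set j | iso G w j] J); congr (_ + _); apply: eq_card => j; rewrite !inE; [by rewrite andbC | by rewrite andbC].
  lia.
apply: (leq_trans (_ : _ <= \sum_(w in G) #|[set j in J | iso G w j]|)).
  rewrite -sum_nat_const; exact: leq_sum.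
under eq_bigr => w _ do rewrite card_sum.
rewrite exchange_big /=.
apply: (leq_trans (_ : _ <= \sum_(j in J) q)); last by rewrite sum_nat_const.
apply: leq_sum => j _; rewrite -card_sum; exact: iso_card.
Qed.
End Core.

Lemma ar1 (a L X : nat) : L <= a -> a - L <= X -> a <= L + X.
Proof. lia. Qed.

Lemma ar2 (k m g : nat) : k <= m -> m - k <= g -> m - g <= k.
Proof. lia. Qed.

Section Ball.
Variables q n : nat.
Implicit Types (G C : {set word q n}) (J : {set 'I_n}).

Lemma ball_branch C G J (k L : nat) (w0 : word q n) :
  G \subset C ->
  (forall x y, x \in G -> y \in G -> forall i, i \notin J -> x i = y i) ->
  (forall v : word q n, #|[set c in C | hamming v c <= k]| <= L) ->
  L.+1 <= #|G| -> L.+1 * (#|J| - k) <= #|J| + L -> L <= #|J| - k -> k <= #|J| ->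
  w0 \in G -> L <= #|[set j in J | ~~ iso G w0 j]| -> False.
Proof.
move=> sGC agree Hld HG Ha1 Ha2 Hk w0G HNJ.
set a := #|J| - k.
set NJ := [set j in J | ~~ iso G w0 j].
have [P [sPNJ cP]] := subset_card HNJ.
have sPJ : P \subset J.
  by apply: (subset_trans sPNJ); apply/subsetP => j; rewrite inE => /andP[].
pose p j := odflt w0 [pick c in G | (c != w0) && (c j == w0 j)].
have Hp : forall j, j \in P -> [/\ p j \in G, p j != w0 & p j j = w0 j].
  move=> j jP; have := subsetP sPNJ j jP; rewrite inE => /andP [_ niso].
  rewrite /p; case: pickP => [c /andP [cG /andP [cw /eqP cj]] | h] /=.
    by [].
  exfalso; move/negP: niso; apply; apply/forall_inP => c cG; apply/implyP => cw.
  apply/negP => cj; have := h c; by rewrite /= cG cw cj.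
set T := w0 |: (p @: P).
have sTG : T \subset G.
  rewrite subUset sub1set w0G /=; apply/subsetP => x /imsetP [j jP ->].
  by case: (Hp j jP).
have cT : #|T| <= L.+1.
  rewrite cardsU1; have := leq_imset_card p P; rewrite cP; case: (w0 \notin _) => /=; lia.
have hAk : L.+1 - #|T| <= #|G :\: T|.
  rewrite cardsD (setIidPr sTG); exact: leq_sub2r.
have [A [sA cA]] := subset_card hAk.
set S := T :|: A.
have sSG : S \subset G by rewrite subUset sTG /=; apply: (subset_trans sA); exact: subsetDl.
have cS : #|S| = L.+1.
  rewrite /S cardsU cA.
  have -> : T :&: A = set0.
    apply/setP => x; rewrite inE in_set0; apply/negP => /andP [xT xA].
    by move: (subsetP sA x xA); rewrite inE xT.
  rewrite cards0; lia.
have w0S : w0 \in S by rewrite !inE eqxx.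
have pS : forall j, j \in P -> p j \in S :\ w0.
  move=> j jP; case: (Hp j jP) => _ ne _.
  by rewrite !inE ne /= (imset_f p jP) orbT.
set e := fun u => #|[set j in P | p j == u]|.
have eL : forall u, e u <= L.
  move=> u; rewrite -cP; apply: subset_leq_card; apply/subsetP => j; rewrite inE; by case/andP.
have sume : \sum_(u in S :\ w0) e u = L.
  rewrite -cP -sum1_card (partition_big p (mem (S :\ w0))) //=.
  apply: eq_bigr => u _; rewrite /e -sum1_card; apply: eq_bigl => j; by rewrite inE.
have cSw : #|S :\ w0| = L by move: cS; rewrite (cardsD1 w0 S) w0S add1n; case.
set D := fun u => if u == w0 then a - L else a - e u.
set F := J :\: P.
have cF : #|F| = #|J| - L by rewrite cardsD (setIidPr sPJ) cP.
have sumD : \sum_(u in S) D u <= #|F|.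
  rewrite (big_setD1 w0 w0S) /= {1}/D eqxx.
  have -> : \sum_(u in S :\ w0) D u = \sum_(u in S :\ w0) (a - e u).
    apply: eq_bigr => u; rewrite !inE => /andP [ne _]; by rewrite /D (negbTE ne).
  have : \sum_(u in S :\ w0) (a - e u) + \sum_(u in S :\ w0) e u = L * a.
    rewrite -big_split /= -cSw -sum_nat_const; apply: eq_bigr => u _.
    have := eL u; lia.
  rewrite sume cF; nia.
have [tau Htau] := assign w0 sumD.
pose v : word q n := [ffun j => if j \in F then tau j j else w0 j].
have Hball : forall u, u \in S -> hamming v u <= k.
  move=> u uS.
  set Good := (if u == w0 then P else [set j in P | p j == u]) :|: [set j in F | tau j == u].
  have sub1 : [set i | v i != u i] \subset J :\: Good.
    apply/subsetP => i; rewrite inE /v ffunE => neq.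
    have iFe : (i \in F) = (i \notin P) && (i \in J) by rewrite in_setD.
    rewrite in_setD; case iJ : (i \in J); last first.
      move: neq; rewrite iFe iJ andbF.
      by rewrite (agree w0 u w0G (subsetP sSG u uS) i) ?iJ // eqxx.
    rewrite andbT in_setU; apply/negP => /orP [H | ].
      have iP : i \in P by move: H; case: (u == w0); rewrite // inE => /andP[].
      move: neq; rewrite iFe iP /=.
      case: (eqVneq u w0) H => [-> | ne]; first by rewrite eqxx.
      rewrite inE iP /= => /eqP <-; case: (Hp i iP) => _ _ ->; by rewrite eqxx.
    rewrite inE => /andP [iF /eqP tu]; by move: neq; rewrite iF tu eqxx.
  have sGJ : Good \subset J.
    rewrite subUset; apply/andP; split.
      case: (u == w0) => //; apply/subsetP => j; rewrite inE => /andP [jP _].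
      exact: (subsetP sPJ).
    apply/subsetP => j; rewrite !inE => /andP [/andP [_ jJ] _] //.
  have cGood : a <= #|Good|.
    rewrite cardsU.
    have -> : (if u == w0 then P else [set j in P | p j == u]) :&: [set j in F | tau j == u] = set0.
      apply/setP => j; rewrite !inE; apply/negP => /andP [H /andP [/andP [jnP _] _]].
      move: H; case: (u == w0) => //; first by rewrite (negbTE jnP).
      by rewrite inE (negbTE jnP).
    rewrite cards0 subn0.
    have := Htau u uS; rewrite /D.
    case: (eqVneq u w0) => [-> | ne] /=; first by rewrite cP; apply: ar1.
    have := eL u; rewrite -/(e u) => eu; apply: ar1; exact: leq_trans eu Ha2.
  rewrite /hamming; apply: (leq_trans (subset_leq_card sub1)).
  rewrite cardsD (setIidPr sGJ); exact: ar2 Hk cGood.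
have : S \subset [set c in C | hamming v c <= k].
  apply/subsetP => u uS; rewrite inE (subsetP sGC u (subsetP sSG u uS)) /=; exact: Hball.
move/subset_leq_card; rewrite cS => h; have := leq_trans h (Hld v); by rewrite ltnn.
Qed.
End Ball.

Lemma ar3 (G m q L : nat) : L * L <= m -> G * (m + 1 - L) <= m * q -> G * m <= q * (m + L).
Proof.
move=> h1 h2.
have hLm : L <= m by clear h2; move: h1; case: L => // L; nia.
have hd : 0 < m + 1 - L by lia.
rewrite -(leq_pmul2r hd).
have e1 : G * m * (m + 1 - L) = m * (G * (m + 1 - L)) by lia.
have e2 : q * (m + L) * (m + 1 - L) = ((m + L) * (m + 1 - L)) * q by lia.
have h : m * m <= (m + L) * (m + 1 - L) by nia.
rewrite e1 e2; apply: (leq_trans (leq_mul (leqnn m) h2)).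
rewrite mulnA; exact: leq_mul h (leqnn q).
Qed.

Section Grp.
Variables q n : nat.

Lemma group_bound (C G : {set word q n}) (J : {set 'I_n}) (k L : nat) :
  G \subset C ->
  (forall x y, x \in G -> y \in G -> forall i, i \notin J -> x i = y i) ->
  (forall v : word q n, #|[set c in C | hamming v c <= k]| <= L) ->
  L.+1 * (#|J| - k) <= #|J| + L -> L <= #|J| - k -> k <= #|J| -> L * L <= #|J| ->
  #|G| <= L \/ #|G| * #|J| <= q * (#|J| + L).
Proof.
move=> sGC agree Hld h1 h2 h3 h4.
case: (leqP #|G| L) => hG; [by left | right].
case: (boolP [exists w0 in G, L <= #|[set j in J | ~~ iso G w0 j]|]).
  case/exists_inP => w0 w0G hw0; exfalso.
  exact: (ball_branch sGC agree Hld hG h1 h2 h3 w0G hw0).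
move=> hn; apply: ar3 h4 _.
apply: count_branch => w wG; rewrite ltnNge; apply/negP => hw.
by move/negP: hn; apply; apply/exists_inP; exists w.
Qed.
End Grp.

Section Cnt.
Variables q n : nat.

Lemma keys_card (J : {set 'I_n}) (d : 'I_q) (K : {set word q n}) :
  (forall f, f \in K -> forall i, i \in J -> f i = d) -> #|K| <= q ^ (n - #|J|).
Proof.
move=> HK.
pose res (f : word q n) : {ffun {i : 'I_n | i \notin J} -> 'I_q} := [ffun x => f (val x)].
have := @leq_card_in _ _ res K.
rewrite card_ffun card_ord card_sig.
have -> : #|[pred x | x \notin J]| = n - #|J|.
  have := cardsC J; rewrite card_ord => h.
  have -> : #|[pred x | x \notin J]| = #|~: J| by apply: eq_card => x; rewrite !inE.
  lia.
apply=> f1 f2 f1K f2K e; apply/ffunP => i.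
case iJ : (i \in J); first by rewrite (HK f1 f1K i iJ) (HK f2 f2K i iJ).
have iJ' : i \notin J by rewrite iJ.
have := congr1 (fun g : {ffun {i : 'I_n | i \notin J} -> 'I_q} => g (exist _ i iJ')) e.
by rewrite /res !ffunE.
Qed.

Definition key (J : {set 'I_n}) (d : 'I_q) (w : word q n) : word q n :=
  [ffun i => if i \in J then d else w i].

Local Open Scope ring_scope.
Lemma code_bound (R : numDomainType) (C : {set word q n}) (J : {set 'I_n}) (d : 'I_q) (B : R) :
  (forall G : {set word q n}, G \subset C ->
     (forall x y, x \in G -> y \in G -> forall i, i \notin J -> x i = y i) ->
     (#|G|)%:R <= B) ->
  (#|C|)%:R <= ((q ^ (n - #|J|))%N)%:R * B.
Proof.
move=> HG.
have B0 : 0 <= B.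
  have := HG set0 (sub0set C); rewrite cards0; apply; by move=> x y; rewrite in_set0.
set K := [set key J d w | w in C].
have cK : (#|K| <= q ^ (n - #|J|))%N.
  apply: (keys_card (d := d)) => f /imsetP [w _ ->] i iJ; by rewrite /key ffunE iJ.
have eC : #|C| = (\sum_(kk in K) #|[set w in C | key J d w == kk]|)%N.
  rewrite -sum1_card (partition_big (key J d) (mem K)) /=; last first.
    by move=> w wC; apply: imset_f.
  apply: eq_bigr => kk _; rewrite -sum1_card; apply: eq_bigl => w; by rewrite inE.
rewrite eC natr_sum.
have Hk : forall kk, kk \in K -> (#|[set w in C | key J d w == kk]|)%:R <= B.
  move=> kk _; apply: HG.
    by apply/subsetP => w; rewrite inE => /andP[].
  move=> x y; rewrite !inE => /andP [_ /eqP ex] /andP [_ /eqP ey] i iJ.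
  have := congr1 (fun g : word q n => g i) (etrans ex (esym ey)).
  by rewrite /key !ffunE (negbTE iJ).
apply: (le_trans (ler_sum _ Hk)).
rewrite sumr_const -[B *+ _]mulr_natl; apply: ler_wpM2r => //; by rewrite ler_nat.
Qed.
End Cnt.


Lemma ar4 (L s k : nat) : 1 <= L -> L * s <= L.+1 * k -> L.+1 * k < L * s.+1 -> L * L.+1 < k ->
 [/\ L.+1 * (s.+1 - k) <= s.+1 + L, L <= s.+1 - k, k <= s.+1 & L * L <= s.+1].
Proof. move=> h0 h1 h2 h3; split; nia. Qed.

Lemma ar5 (L s k n : nat) : 1 <= L -> L * s <= L.+1 * k -> L.+1 * k < L * n -> s.+1 <= n.
Proof. move=> h0 h1 h2; have : L * s < L * n by lia. by rewrite ltn_pmul2l. Qed.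

Unset Implicit Arguments.
From mathcomp Require Import all_classical all_reals all_analysis.
From mathcomp Require Import ring lra.
Import Order.TTheory GRing.Theory Num.Theory.
Local Open Scope ring_scope.

Theorem theorem3p1 (R : realType) (L : nat) (r : R) :
  (1 <= L)%N -> 0 <= r -> r < L%:R / (L.+1)%:R ->
  exists (N : nat) (g : nat -> R),
    (forall n, 0 <= g n) /\ (g n @[n --> \oo] --> 0)%classic /\
    forall (q n : nat), (2 <= q)%N -> (N <= n)%N ->
      (exists k : nat, r * n%:R = k%:R) ->
      forall C : {set word q n}, list_decodable r L C ->
        #|C|%:R <= Num.max (q%:R * (1 + g n)) L%:R *
          q%:R ^ (n%:Z - (Num.floor ((L.+1)%:R / L%:R * (r * n%:R)) + 1)).
Proof.
move=> L1 r0 rlt.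
have L0 : (0 : R) < L%:R by rewrite ltr0n.
exists (Num.trunc ((L * L.+1)%:R / r)).+1, (fun n => harmonic n * (L%:R / r)).
split.
  move=> m; apply: mulr_ge0; [exact: harmonic_ge0 | apply: divr_ge0 => //; exact: ler0n].
split.
  rewrite -(mul0r (L%:R / r)); apply: cvgMr_tmp; exact: cvg_harmonic.
case: (eqVneq r 0) => [r00 | rn0].
  move=> q n q2 n1 _ C _.
  rewrite r00 invr0 !(mulr0, mul0r) floor0 add0r addr0 mulr1.
  have e : n%:Z - 1 = (n - 1)%N :> int by lia.
  rewrite e -exprnP.
  have hC : (#|C| <= q ^ n)%N.
    by have := max_card (mem C); rewrite card_ffun !card_ord.
  apply: (le_trans (_ : _ <= (q ^ n)%N%:R)); first by rewrite ler_nat.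
  have -> : (q ^ n = q * q ^ (n - 1))%N by rewrite -expnS subn1 prednK //; apply: leq_trans n1.
  rewrite natrM natrX; apply: ler_wpM2r; first by rewrite exprn_ge0.
  by rewrite le_max lexx.
have rpos : 0 < r by rewrite lt_def rn0 r0.
move=> q n q2 nN [k hk] C hC.
rewrite hk.
set x := L.+1%:R / L%:R * k%:R.
have x' : x = (L.+1 * k)%:R / L%:R by rewrite /x natrM mulrAC.
have x0 : 0 <= x by rewrite x' divr_ge0 // ler0n.
set s := Num.trunc x.
have fx : Num.floor x = s%:Z.
  rewrite /s truncn_floor x0 gez0_abs //; by rewrite floor_ge0.
have /andP [sx xs] := truncn_itv x0; rewrite -/s in sx xs.
have hA : (L * s <= L.+1 * k)%N.
  by move: sx; rewrite x' ler_pdivlMr // -natrM ler_nat mulnC.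
have hB : (L.+1 * k < L * s.+1)%N.
  by move: xs; rewrite x' ltr_pdivrMr // -natrM ltr_nat (mulnC L).
have n0 : (0 < n)%N by apply: leq_trans nN.
have hC' : (L.+1 * k < L * n)%N.
  rewrite -(ltr_nat R) !natrM -hk mulrA.
  rewrite ltr_pM2r ?ltr0n //.
  by move: rlt; rewrite ltr_pdivlMr ?ltr0n // mulrC.
have hK : (L * L.+1 < k)%N.
  have := truncnS_gt ((L * L.+1)%:R / r).
  rewrite ltr_pdivrMr // => h.
  rewrite -(ltr_nat R) -hk (lt_le_trans h) // mulrC ler_pM2l // ler_nat //.
have [h1 h2 h3 h4] := ar4 L1 hA hB hK.
have hmn := ar5 L1 hA hC'.
have [J [_ cJ]] := subset_card (F := [set: 'I_n]) (k := s.+1) ltac:(by rewrite cardsT card_ord).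
have q0 : (0 < q)%N by apply: leq_trans q2.
pose d : 'I_q := Ordinal q0.
have Hld : forall v : word q n, (#|[set c in C | hamming v c <= k]| <= L)%N.
  move=> v; apply: leq_trans (hC v); rewrite hk.
  apply: subset_leq_card; apply/fintype.subsetP => c; by rewrite !inE ler_nat.
set B := Num.max (q%:R * (1 + harmonic n * (L%:R / r))) L%:R.
have H := @code_bound q n R C J d B.
rewrite cJ in H.
have e : n%:Z - (Num.floor x + 1) = (n - s.+1)%N :> int.
  rewrite fx; move: hmn; clear; lia.
rewrite e -exprnP -natrX mulrC; apply: H => G sGC agree.
rewrite -cJ in h1 h2 h3 h4.
have [hG | hG] := group_bound sGC agree Hld h1 h2 h3 h4.
  by rewrite le_max ler_nat hG orbT.
rewrite cJ in hG.
rewrite le_max; apply/orP; left.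
have hkm : (k < s.+1)%N by move: hB; clear; nia.
set m := s.+1 in hG hkm *.
have m0 : (0:R) < m%:R by rewrite ltr0n.
have hG' : (#|G|%:R : R) * m%:R <= q%:R * (m%:R + L%:R).
  move: hG; rewrite -(ler_nat R) !natrM natrD; exact: id.
have r1 : r <= 1.
  apply: ltW; apply: (lt_le_trans rlt); rewrite ler_pdivrMr ?ltr0n // mul1r ler_nat; exact: leqnSn.
have t : r * n.+1%:R <= m%:R.
  rewrite -natr1 mulrDr mulr1 hk; apply: (le_trans (_ : _ <= k%:R + 1)).
    by rewrite lerD2l.
  by rewrite natr1 ler_nat.
set g := harmonic n * (L%:R / r).
have hL : L%:R <= g * m%:R.
  have -> : g * m%:R = (L%:R * m%:R) / (r * n.+1%:R).
    rewrite /g /=; field; by rewrite rn0 andbT addrC natr1 pnatr_eq0.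
  rewrite ler_pdivlMr; last by apply: mulr_gt0 => //; rewrite ltr0n.
  by apply: ler_wpM2l => //; exact: ler0n.
rewrite -(ler_pM2r m0); apply: (le_trans hG').
have -> : q%:R * (1 + g) * m%:R = q%:R * (m%:R + g * m%:R) by ring.
apply: ler_wpM2l; first exact: ler0n.
by rewrite lerD2l.
Qed.
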